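(* Consider $2$ agents with additive, identical, normalized valuations, and online algorithms that have no access to predictions. For any given $a \in (\varphi - 1, 1]$, where $\varphi = \frac{1+\sqrt{5}}{2}$, there is no online algorithm that guarantees an $a$-EFX allocation, even if the time horizon $T$ is known to the algorithm in advance.
   Context: Online fair division model: there is a set $N=[n]$ of agents and goods $g_1,\dots,g_T$ that arrive one per time step $t=1,\dots,T$. Each agent $i$ has an additive normalized valuation $v_i$: $v_i(g_t)\ge 0$, $\sum_{t=1}^T v_i(g_t)=1$, and $v_i(S)=\sum_{g\in S} v_i(g)$. Valuations are identical if $v_i=v$ for all agents. When good $g_t$ arrives, its true values $v_i(g_t)$ for all agents are revealed and the algorithm must immediately and irrevocably allocate $g_t$ to one agent. An allocation $A=(A_1,\dots,A_n)$ is a partition of the goods. For a bundle $S\neq\emptyset$ and valuation $f$, let $\bar S^f = S\setminus\{g\}$ where $g\in\arg\max_{g'\in S} f(S\setminus\{g'\})$ (i.e. a least valuable good is removed), and $\bar\emptyset^f=\emptyset$. For $a\in[0,1]$, the allocation is $a$-EFX (with respect to valuations $f_i$) if $f_i(A_i)\ge a\cdot f_i(\bar{A_j}^{f_i})$ for all agents $i,j$. An algorithm guarantees an $a$-EFX allocation if, for every admissible input sequence, the final allocation after all goods have arrived is $a$-EFX with respect to the true valuations. *)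

(* Defs.v *)
From HB Require Import structures.
From mathcomp Require Import all_boot all_order all_algebra.
From mathcomp Require Import reals.
Set Implicit Arguments. Unset Strict Implicit. Unset Printing Implicit Defensive.
Import Order.TTheory GRing.Theory Num.Theory.
Local Open Scope ring_scope.

(* Goods g_1..g_T are indexed by t : 'I_T (t = 0 is the first good).
   Agents are 'I_2.  Identical valuations: a single v : 'I_T -> R. *)

Definition bval (R : realType) (T : nat) (v : 'I_T -> R) (S : {set 'I_T}) : R :=
  \sum_(g in S) v g.

Definition normalized (R : realType) (T : nat) (v : 'I_T -> R) : Prop :=
  (forall t, 0 <= v t) /\ \sum_(t < T) v t = 1.

(* \bar S^f : S minus a good g maximizing f(S \ g) ; empty stays empty *)
Definition bar (R : realType) (T : nat) (f : {set 'I_T} -> R) (S : {set 'I_T})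
  : {set 'I_T} :=
  if [pick g in S | [forall g' in S, f (S :\ g') <= f (S :\ g)]] is Some g
  then S :\ g else set0.

Definition aEFX (R : realType) (T : nat) (a : R) (f : 'I_2 -> {set 'I_T} -> R)
  (A : 'I_2 -> {set 'I_T}) : Prop :=
  forall i j : 'I_2, f i (A i) >= a * f i (bar (f i) (A j)).

(* A deterministic online algorithm for 2 agents with identical valuations that
   knows the horizon T: given T and the sequence of revealed values of the goods
   g_1..g_t (the current good last), it returns the agent receiving g_t.
   (Past allocation decisions are a function of the same data, so they need not
   be passed explicitly.) *)
Definition online_alg (R : realType) := nat -> seq R -> 'I_2.

Definition history (R : realType) (T : nat) (v : 'I_T -> R) (t : 'I_T) : seq R :=
  [seq v j | j : 'I_T <- [seq j <- enum 'I_T | (nat_of_ord j <= nat_of_ord t)%N]].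

Definition run (R : realType) (alg : online_alg R) (T : nat) (v : 'I_T -> R)
  : 'I_2 -> {set 'I_T} :=
  fun i => [set t | alg T (history v t) == i].

(* Main.v *)
Require Import Defs.
From HB Require Import structures.
From mathcomp Require Import all_boot all_order all_algebra.
From mathcomp Require Import reals.
From mathcomp Require Import lra.
Import Order.TTheory GRing.Theory Num.Theory.
Local Open Scope ring_scope.

Lemma bar_ge (R : realType) (T : nat) (v : 'I_T -> R) (S : {set 'I_T}) g :
  g \in S -> bval v (S :\ g) <= bval v (bar (bval v) S).
Proof.
move=> Hg; rewrite /bar; case: pickP => [g0 /andP [Hg0 /forallP H] | H].
  by have /implyP := H g; apply.
exfalso.
case: (@arg_maxP _ _ _ g (fun x => x \in S) (fun g1 => bval v (S :\ g1)) Hg) => g1 Hg1 Hmax.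
have := H g1; rewrite Hg1 /=; move/negP; apply; apply/forallP => g2; apply/implyP => Hg2.
exact: Hmax.
Qed.

Lemma hist (R : realType) (T : nat) (s : seq R) (t : 'I_T) :
  history (fun j : 'I_T => nth 0 s (val j)) t =
  map (nth 0 s) [seq k <- iota 0 T | (k <= t)%N].
Proof.
by rewrite /history -val_enum_ord filter_map -map_comp.
Qed.
Lemma viol (R : realType) (T : nat) (a : R) (v : 'I_T -> R) (A : 'I_2 -> {set 'I_T}) (i j : 'I_2) g :
  0 <= a -> g \in A j -> bval v (A i) < a * bval v (A j :\ g) ->
  ~ aEFX a (fun _ => bval v) A.
Proof.
move=> ha Hg Hlt H; have h1 := @bar_ge _ _ v _ _ Hg; have h2 := H i j.
have h3 := ler_wpM2l ha h1.
by move: h2; rewrite leNgt (lt_le_trans Hlt h3).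
Qed.

Lemma ord2 (i : 'I_2) : i = ord0 \/ i = ord_max.
Proof. by case: i => [[|[|]]] // ?; [left|right]; apply: val_inj. Qed.

Lemma bval4 (R : realType) (v : 'I_4 -> R) S : bval v S =
  (if ord0 \in S then v ord0 else 0) +
  ((if lift ord0 ord0 \in S then v (lift ord0 ord0) else 0) +
   ((if lift ord0 (lift ord0 ord0) \in S
     then v (lift ord0 (lift ord0 ord0))
     else 0) +
    ((if lift ord0 (lift ord0 (lift ord0 ord0)) \in S
      then v (lift ord0 (lift ord0 (lift ord0 ord0)))
      else 0) +
     0))).
Proof. by rewrite /bval big_mkcond /= !big_ord_recl big_ord0 /=. Qed.


Ltac solve1 H0 H1 H2 H3 i j g :=
  apply: (@viol _ _ _ _ _ i j g);
  [ lra
  | by rewrite /run inE hist /= ?H0 ?H1 ?H2 ?H3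
  | rewrite !bval4 /run !inE !hist /= ?H0 ?H1 ?H2 ?H3 /=; lra ].

Ltac solve_all H0 H1 H2 H3 :=
  first [ solve1 H0 H1 H2 H3 (@ord0 1) (@ord_max 1) (@Ordinal 4 0 isT)
        | solve1 H0 H1 H2 H3 (@ord0 1) (@ord_max 1) (@Ordinal 4 1 isT)
        | solve1 H0 H1 H2 H3 (@ord0 1) (@ord_max 1) (@Ordinal 4 2 isT)
        | solve1 H0 H1 H2 H3 (@ord0 1) (@ord_max 1) (@Ordinal 4 3 isT)
        | solve1 H0 H1 H2 H3 (@ord_max 1) (@ord0 1) (@Ordinal 4 0 isT)
        | solve1 H0 H1 H2 H3 (@ord_max 1) (@ord0 1) (@Ordinal 4 1 isT)
        | solve1 H0 H1 H2 H3 (@ord_max 1) (@ord0 1) (@Ordinal 4 2 isT)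
        | solve1 H0 H1 H2 H3 (@ord_max 1) (@ord0 1) (@Ordinal 4 3 isT) ].

Lemma main_abs (R : realType) (a x y : R) (alg : online_alg R) :
  0 < a -> 0 <= x -> x + 2 * y = 1 -> x < a * y -> y < a * (x + y) ->
  exists (T : nat) (v : 'I_T -> R),
    normalized v /\ ~ aEFX a (fun _ : 'I_2 => bval v) (run alg v).
Proof.
move=> ha hx hs h1 h2.
have hy : 0 < y by nra.
have hay : 0 < a * y by nra.
have haa : a * x + 2 * (a * y) = a by rewrite mulrCA -mulrDr hs mulr1.
case: (boolP (alg 4 [:: 0; x] == alg 4 [:: 0])) => Hd.
- exists 4, (fun j : 'I_4 => nth 0 [:: 0; x; y; y] (val j)); split.
    split; last by rewrite !big_ord_recl big_ord0 /=; lra.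
    by case=> [[|[|[|[|]]]]] //= _; lra.
  have [H0|H0] := ord2 (alg 4 [:: 0]); have [H1|H1] := ord2 (alg 4 [:: 0; x]);
  have [H2|H2] := ord2 (alg 4 [:: 0; x; y]); have [H3|H3] := ord2 (alg 4 [:: 0; x; y; y]);
  rewrite ?H0 ?H1 in Hd => //; solve_all H0 H1 H2 H3.
- exists 4, (fun j : 'I_4 => nth 0 [:: 0; x; 0; 2 * y] (val j)); split.
    split; last by rewrite !big_ord_recl big_ord0 /=; lra.
    by case=> [[|[|[|[|]]]]] //= _; lra.
  have [H0|H0] := ord2 (alg 4 [:: 0]); have [H1|H1] := ord2 (alg 4 [:: 0; x]);
  have [H2|H2] := ord2 (alg 4 [:: 0; x; 0]); have [H3|H3] := ord2 (alg 4 [:: 0; x; 0; 2 * y]);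
  rewrite ?H0 ?H1 in Hd => //; solve_all H0 H1 H2 H3.
Qed.
Theorem theorem3p1 (R : realType) (a : R) :
  (Num.sqrt 5 - 1) / 2 < a -> a <= 1 ->
  forall alg : online_alg R,
  exists (T : nat) (v : 'I_T -> R),
    normalized v /\ ~ aEFX a (fun _ : 'I_2 => bval v) (run alg v).
Proof.
move=> ha _ alg.
move: ha; set q := (X in (X - 1) / 2 < _) => ha.
have hq0 : 0 <= q by rewrite /q sqrtr_ge0.
have hq2 : q * q = 5 by rewrite /q -expr2 sqr_sqrtr.
clearbody q.
have hq1 : q - 1 < 2 * a by move: ha; rewrite ltr_pdivrMr //; lra.
have hq : 1 < q by nra.
have apos : 0 < a by nra.
have ha2 : 1 < a * a + a.
  have : 0 < (2 * a + 1 - q) * (2 * a + 1 + q) by apply: mulr_gt0; lra.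
  nra.
set s := 1 + 3 * a + a * a.
have hs : 0 < s by rewrite /s; nra.
have si : 0 < s^-1 by rewrite invr_gt0.
set x' := 1 - a + a * a.
set y' := 2 * a.
apply: (@main_abs R a (x' * s^-1) (y' * s^-1) alg apos).
- by apply: mulr_ge0; rewrite /x'; nra.
- rewrite mulrA -mulrDl (_ : x' + 2 * y' = s) ?mulfV ?gt_eqF //.
  by rewrite /x' /y' /s; lra.
- by rewrite mulrA ltr_pM2r // /x' /y'; nra.
- by rewrite -mulrDl mulrA ltr_pM2r // /x' /y'; nra.
Qed.
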